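(* Let $B$ be an nbc basis of $M$ with $\mathrm{IA}(B)=\{c_1>\cdots>c_{k+1}\}$, and set $S_B=B-\mathrm{IA}(B)=\{e_1>\cdots>e_{r-k}\}$ and $T_B=(E-B)-\min(E-B)=\{e_{r-k+1}<\cdots<e_{n-k-1}\}$. Then: (1) The largest index $i$ such that $c_i\notin\mathrm{cl}(S_B)\cup\mathrm{cl}^\perp(T_B)$ exists and equals the smallest index $i$ such that $\mathrm{cl}(S_B\cup\{c_1,\dots,c_i\})\cup\mathrm{cl}^\perp(T_B)=E$. (2) With this $i$, the set of $n-1$ pairs $F^+_j|G^+_j$, $1\le j\le n-1$, given by $\mathrm{cl}\{e_1,\dots,e_j\}\,|\,E$ for $1\le j\le r-k$; $\mathrm{cl}(S_B\cup\{c_1,\dots,c_{j-(r-k)}\})\,|\,E$ for $1\le j-(r-k)\le i-1$; $\mathrm{cl}(S_B\cup\{c_1,\dots,c_{j-(r-k)}\})\,|\,\mathrm{cl}^\perp(T_B)$ for $i\le j-(r-k)\le k$; $E\,|\,\mathrm{cl}^\perp\{e_{j-k},\dots,e_{n-k-1}\}$ for $r+1\le j\le n-1$, is a maximal biflag of $M$.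
   Context: Let $M$ be a matroid with no loops and no coloops on the ground set $E=\{0,1,\dots,n\}$, totally ordered by the usual order of integers, of rank $r+1$; its dual $M^\perp$ has rank $n-r$. Write $\mathrm{cl}$, $\mathrm{cl}^\perp$ for the closure operators of $M$, $M^\perp$. A biflat of $M$ is a pair $F|G$ where $F$ is a flat of $M$, $G$ is a flat of $M^\perp$, both are nonempty, they are not both equal to $E$, and $F\cup G=E$. Two biflats $F|G$, $F'|G'$ are compatible if ($F\subseteq F'$ and $G\supseteq G'$) or ($F\supseteq F'$ and $G\subseteq G'$). A biflag is a set of pairwise compatible biflats with $\bigcup_{F|G}(F\cap G)\neq E$; maximal means maximal under inclusion among biflags. For a basis $B$ and $i\in B$, $C^\perp(B,i)$ is the unique cocircuit of $M$ contained in $(E-B)\cup i$ and containing $i$; for $i\notin B$, $C(B,i)$ is the unique circuit contained in $B\cup i$ and containing $i$. $\mathrm{IA}(B)=\{i\in B: i=\min C^\perp(B,i)\}$, $\mathrm{EA}(B)=\{i\notin B: i=\min C(B,i)\}$. $B$ is an nbc basis if $\mathrm{EA}(B)=\emptyset$. *)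

(* Defs.v *)
(* Matroids on the ground set E = {0,...,n} = 'I_n.+1,
   given by their independent sets. *)
From mathcomp Require Import all_boot.
Set Implicit Arguments. Unset Strict Implicit. Unset Printing Implicit Defensive.

Record matroid (n : nat) := Matroid {
  indep : {set 'I_n.+1} -> bool;
  indep0 : indep set0;
  indep_sub : forall A B : {set 'I_n.+1}, B \subset A -> indep A -> indep B;
  indep_aug : forall A B : {set 'I_n.+1}, indep A -> indep B -> #|A| < #|B| ->
     exists2 x, x \in B :\: A & indep (x |: A) }.

Section Defs.
Variables (n : nat) (M : matroid n).
Local Notation T := 'I_n.+1.

Definition rk (ind : {set T} -> bool) (X : {set T}) : nat :=
  \max_(I : {set T} | ind I && (I \subset X)) #|I|.
Definition clo (ind : {set T} -> bool) (X : {set T}) : {set T} :=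
  [set x | rk ind (x |: X) == rk ind X].

Definition rank := rk (indep M).
Definition cl := clo (indep M).
Definition is_basis (B : {set T}) := indep M B && (#|B| == rank setT).

Definition indepD (X : {set T}) := [exists B : {set T}, is_basis B && [disjoint X & B]].
Definition clD := clo indepD.

Definition circuit_of (ind : {set T} -> bool) (C : {set T}) :=
  ~~ ind C && [forall D : {set T}, (D \proper C) ==> ind D].
Definition circuit := circuit_of (indep M).
Definition cocircuit := circuit_of indepD.

Definition is_loop (x : T) := ~~ indep M [set x].
Definition is_coloop (x : T) := forall B, is_basis B -> x \in B.

Definition IA (B : {set T}) : {set T} :=
  [set i in B | [exists C : {set T}, [&& cocircuit C, C \subset (~: B) :|: [set i],
                 i \in C & [forall x in C, i <= x]]]].
Definition EA (B : {set T}) : {set T} :=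
  [set i in ~: B | [exists C : {set T}, [&& circuit C, C \subset B :|: [set i],
                 i \in C & [forall x in C, i <= x]]]].
Definition nbc_basis (B : {set T}) := is_basis B && (EA B == set0).

Definition flat (F : {set T}) := cl F == F.
Definition flatD (G : {set T}) := clD G == G.
Definition biflat (p : {set T} * {set T}) :=
  [&& flat p.1, flatD p.2, p.1 != set0, p.2 != set0,
      ~~ ((p.1 == setT) && (p.2 == setT)) & p.1 :|: p.2 == setT].
Definition compatible (p q : {set T} * {set T}) :=
  ((p.1 \subset q.1) && (q.2 \subset p.2)) || ((q.1 \subset p.1) && (p.2 \subset q.2)).
Definition biflag (P : {set {set T} * {set T}}) :=
  [&& [forall p in P, biflat p], [forall p in P, forall q in P, compatible p q]
    & \bigcup_(p in P) (p.1 :&: p.2) != setT].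
Definition maximal_biflag (P : {set {set T} * {set T}}) :=
  biflag P /\ forall Q, biflag Q -> P \subset Q -> Q = P.

Definition S_B (B : {set T}) := B :\: IA B.
(* (E - B) - min(E - B) *)
Definition T_B (B : {set T}) := [set x in ~: B | [exists y in ~: B, y < x]].
(* c_1 > c_2 > ... > c_{k+1} : IA(B) in decreasing order *)
Definition cseq (B : {set T}) : seq T := sort (fun x y : T => y <= x) (enum (IA B)).
Definition c (B : {set T}) (j : nat) : T := nth ord0 (cseq B) j.-1.
(* e_1 > ... > e_{r-k} (S_B decreasing) followed by e_{r-k+1} < ... < e_{n-k-1} (T_B increasing) *)
Definition eseq (B : {set T}) : seq T :=
  sort (fun x y : T => y <= x) (enum (S_B B)) ++ sort (fun x y : T => x <= y) (enum (T_B B)).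
Definition sset (s : seq T) : {set T} := [set x in s].
Definition cfirst (B : {set T}) (m : nat) := sset (take m (cseq B)).

(* the pairs F^+_j | G^+_j, with r + 1 = rank M, k + 1 = #|IA B|, and i the index of part (1) *)
Definition FGplus (B : {set T}) (r k i j : nat) : {set T} * {set T} :=
  if j <= r - k then (cl (sset (take j (eseq B))), setT)
  else if j <= r then
    let m := j - (r - k) in
    (cl (S_B B :|: cfirst B m), if m <= i - 1 then setT else clD (T_B B))
  else (setT, clD (sset (drop (j - k).-1 (eseq B)))).
End Defs.

(* Main.v *)
Require Import Defs.
From mathcomp Require Import all_boot.
From mathcomp Require Import zify.
Set Implicit Arguments. Unset Strict Implicit. Unset Printing Implicit Defensive.

Lemma disjC (n : nat) (X Y : {set 'I_n.+1}) : [disjoint X & Y] = (X \subset ~: Y).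
Proof. by rewrite subsets_disjoint setCK. Qed.

Ltac nlia := repeat match goal with
  | H : is_true (leq _ _) |- _ => revert H
  | H : @eq nat _ _ |- _ => revert H end;
  try rewrite /reverse_coercion; intros; lia.

Section Gen.
Variables (n : nat) (M : matroid n).
Local Notation T := 'I_n.+1.
Implicit Types (X Y F I J K : {set T}) (x y : T).

Lemma rank_witness X : exists2 I, indep M I && (I \subset X) & #|I| = rank M X.
Proof.
rewrite /rank /rk.
have P0 : indep M set0 && (set0 \subset X) by rewrite indep0 sub0set.
exists [arg max_(I > set0 | indep M I && (I \subset X)) #|I|].
  by case: arg_maxnP.
by rewrite (bigmax_eq_arg set0).
Qed.

Lemma indep_le_rank I X : indep M I -> I \subset X -> #|I| <= rank M X.
Proof. by move=> hI hIX; rewrite /rank /rk; apply: (bigmax_sup I) => //; rewrite hI hIX. Qed.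

Lemma rank_le_card X : rank M X <= #|X|.
Proof. by case: (rank_witness X) => I /andP[_ h] <-; exact: subset_leq_card. Qed.

Lemma rank_mono X Y : X \subset Y -> rank M X <= rank M Y.
Proof.
move=> hXY; case: (rank_witness X) => I /andP[hI h] <-.
exact: indep_le_rank hI (subset_trans h hXY).
Qed.

Lemma rank_indep I : indep M I -> rank M I = #|I|.
Proof. by move=> hI; apply/eqP; rewrite eqn_leq rank_le_card indep_le_rank. Qed.

Lemma rank_indepP X : rank M X = #|X| -> indep M X.
Proof.
case: (rank_witness X) => I /andP[hI h] <- e.
have : I == X by rewrite eqEcard h e leqnn.
by move/eqP <-.
Qed.

Lemma extend I X : indep M I -> I \subset X ->
  exists J, [/\ indep M J, I \subset J, J \subset X & #|J| = rank M X].
Proof.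
move=> hI hIX.
move: {2}(rank M X - #|I|) (erefl (rank M X - #|I|)) => d.
elim: d I hI hIX => [|d IH] I hI hIX hd.
  exists I; split => //; have := indep_le_rank hI hIX; lia.
case: (rank_witness X) => K /andP[hK hKX] eK.
have lt : #|I| < #|K| by lia.
case: (indep_aug hI hK lt) => x /setDP[xK xI] hxI.
have hxX : x |: I \subset X by rewrite subUset sub1set (subsetP hKX) // hIX.
have cx : #|x |: I| = #|I|.+1 by rewrite cardsU1 xI.
case: (IH _ hxI hxX) => [|J [h1 h2 h3 h4]]; first by rewrite cx; lia.
exists J; split => //; apply: subset_trans h2; exact: subsetUr.
Qed.

Lemma rank_U1 x X : rank M (x |: X) <= (rank M X).+1.
Proof.
case: (rank_witness (x |: X)) => I /andP[hI h] <-.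
have hI' : indep M (I :\ x) by apply: indep_sub hI; exact: subD1set.
have : I :\ x \subset X.
  apply/subsetP => y /setD1P[yx yI]; move: (subsetP h y yI); rewrite in_setU1.
  by rewrite (negPf yx).
move/(indep_le_rank hI') => le; rewrite (cardsD1 x I); case: (x \in I) => /=.
  by rewrite add1n ltnS.
by rewrite add0n; apply: leq_trans (leqnSn _).
Qed.

Lemma rank_U1_ge x X : rank M X <= rank M (x |: X).
Proof. by apply: rank_mono; exact: subsetUr. Qed.

Lemma clP x X : (x \in cl M X) = (rank M (x |: X) == rank M X).
Proof. by rewrite /cl /clo inE. Qed.

Lemma U1_id x (X : {set T}) : x \in X -> x |: X = X.
Proof. by move=> h; apply: setUidPr; rewrite sub1set. Qed.

Lemma cl_sub X : X \subset cl M X.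
Proof. by apply/subsetP => x hx; rewrite clP U1_id. Qed.

Lemma cl_mono X Y : X \subset Y -> cl M X \subset cl M Y.
Proof.
move=> hXY; apply/subsetP => x; rewrite !clP => /eqP hx.
case: (boolP (x \in Y)) => xY; first by rewrite U1_id.
case: (rank_witness X) => I /andP[hI hIX] eI.
case: (extend hI (subset_trans hIX hXY)) => J [hJ hIJ hJY eJ].
have hJ' : J \subset x |: Y by apply: subset_trans hJY (subsetUr _ _).
case: (extend hJ hJ') => J' [hJ'i hJJ' hJ'Y eJ'].
apply/eqP/anti_leq; rewrite rank_U1_ge andbT.
rewrite leqNgt; apply/negP => lt.
have xJ' : x \in J'.
  apply/negPn/negP => xn.
  have : J' \subset Y.
    apply/subsetP => y yJ; move: (subsetP hJ'Y y yJ); rewrite in_setU1.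
    by case/predU1P => [e|//]; rewrite -e yJ in xn.
  move/(indep_le_rank hJ'i) => le.
  by have := leq_trans (leq_trans lt (eq_leq (esym eJ'))) le; rewrite ltnn.
have hxI : indep M (x |: I).
  apply: indep_sub hJ'i; rewrite subUset sub1set xJ'.
  exact: subset_trans hIJ hJJ'.
have xI : x \notin I by apply: contra xY => xI; exact: (subsetP hJY x (subsetP hIJ x xI)).
have := indep_le_rank hxI (setUS [set x] hIX); rewrite cardsU1 xI add1n => h.
by have := leq_trans (leq_trans h (eq_leq hx)) (eq_leq (esym eI)); rewrite ltnn.
Qed.

Lemma rank_cl X : rank M (cl M X) = rank M X.
Proof.
apply/eqP; rewrite eqn_leq (rank_mono (cl_sub X)) andbT.
case: (rank_witness X) => I /andP[hI hIX] eI.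
case: (extend hI (subset_trans hIX (cl_sub X))) => J [hJ hIJ hJX eJ].
rewrite -eJ -eI leqNgt; apply/negP => lt.
have : ~~ (J \subset I) by apply/negP => /subset_leq_card; lia.
case/subsetPn => y yJ yI.
have := subsetP hJX y yJ; rewrite clP => /eqP hy.
have hyI : indep M (y |: I) by apply: indep_sub hJ; rewrite subUset sub1set yJ.
have := indep_le_rank hyI (setUS [set y] hIX); rewrite cardsU1 yI add1n => h.
by have := leq_trans (leq_trans h (eq_leq hy)) (eq_leq (esym eI)); rewrite ltnn.
Qed.

Lemma cl_idem X : cl M (cl M X) = cl M X.
Proof.
apply/eqP; rewrite eqEsubset cl_sub andbT.
apply/subsetP => x; rewrite !clP rank_cl => /eqP h; apply/eqP.
apply/anti_leq/andP; split; last exact: rank_U1_ge.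
by apply: leq_trans (rank_mono (setUS [set x] (cl_sub X))) _; apply: eq_leq.
Qed.

Lemma flat_cl X : flat M (cl M X).
Proof. by rewrite /flat cl_idem. Qed.

Lemma flat_setT : flat M setT.
Proof. by apply/eqP/setP => x; rewrite clP in_setT setUT eqxx. Qed.

Lemma flat_lt F F' : flat M F -> F \subset F' -> F != F' -> rank M F < rank M F'.
Proof.
move=> /eqP hF hFF' ne.
have : ~~ (F' \subset F) by apply/negP => h; rewrite eqEsubset hFF' h in ne.
case/subsetPn => x xF' xF.
have : x \notin cl M F by rewrite hF.
rewrite clP => hx.
have sub : x |: F \subset F' by rewrite subUset sub1set xF' hFF'.
apply: leq_trans (rank_mono sub).
by rewrite ltn_neqAle eq_sym hx rank_U1_ge.
Qed.

Lemma flat_eq F F' : flat M F -> F \subset F' -> rank M F' <= rank M F -> F = F'.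
Proof.
move=> hF hFF' le; apply/eqP; apply/negPn/negP => ne.
have := flat_lt hF hFF' ne; lia.
Qed.

Lemma indep_notin_cl Y X x : indep M X -> Y \subset X -> x \in X -> x \notin Y ->
  x \notin cl M Y.
Proof.
move=> hX hYX xX xY; rewrite clP.
have hY : indep M Y by apply: indep_sub hX.
have hxY : indep M (x |: Y) by apply: indep_sub hX; rewrite subUset sub1set xX.
by rewrite !rank_indep // cardsU1 xY /= eqn_leq ltnn.
Qed.

Lemma cl_indep_sub Y X : indep M X -> Y \subset X -> cl M Y :&: X = Y.
Proof.
move=> hX hYX; apply/setP => x; rewrite inE.
case: (boolP (x \in Y)) => xY; first by rewrite (subsetP (cl_sub Y)) // (subsetP hYX).
by case: (boolP (x \in X)) => xX; rewrite ?andbF // (negPf (indep_notin_cl hX hYX xX xY)).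
Qed.

Lemma rank_pos_noloop F x : indep M [set x] -> x \in F -> 0 < rank M F.
Proof. by move=> h xF; have := indep_le_rank h (_ : [set x] \subset F); rewrite sub1set cards1 => /(_ xF). Qed.

Lemma cl0_noloop : (forall x, indep M [set x]) -> cl M set0 = set0.
Proof.
move=> h; apply/setP => x; rewrite clP in_set0 setU0 rank_indep // cards1.
by rewrite (rank_indep (indep0 M)) cards0.
Qed.

Lemma basis_of I : indep M I -> #|I| = rank M setT -> is_basis M I.
Proof. by move=> h e; rewrite /is_basis h e eqxx. Qed.

End Gen.

Section Dual.
Variables (n : nat) (M : matroid n).
Local Notation T := 'I_n.+1.
Implicit Types (X Y F I J K : {set T}) (x y : T).

Lemma indepDP X : indepD M X = (rank M (~: X) == rank M setT).
Proof.
apply/idP/idP.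
  case/existsP => B /andP[/andP[hB /eqP eB] dis].
  rewrite eqn_leq rank_mono ?subsetT //= -eB; apply: indep_le_rank hB _.
  by rewrite disjoint_sym disjC in dis.
move/eqP => e; case: (rank_witness M (~: X)) => I /andP[hI hIX] eI.
apply/existsP; exists I; rewrite (basis_of hI) ?eI //=.
by rewrite disjoint_sym disjC.
Qed.

Lemma indepD0 : indepD M set0.
Proof. by rewrite indepDP setC0. Qed.

Lemma indepD_sub X Y : Y \subset X -> indepD M X -> indepD M Y.
Proof.
move=> hYX; rewrite !indepDP => /eqP e; rewrite eqn_leq rank_mono ?subsetT //= -e.
by apply: rank_mono; rewrite setCS.
Qed.

Lemma indepD_aug I J : indepD M I -> indepD M J -> #|I| < #|J| ->
  exists2 x, x \in J :\: I & indepD M (x |: I).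
Proof.
move=> hI hJ lt.
case: (boolP [exists x in J :\: I, indepD M (x |: I)]).
  by case/existsP => x /andP[h1 h2]; exists x.
rewrite negb_exists => /forallP hall.
case/existsP: hJ => B2 /andP[/andP[hB2 /eqP eB2] dJ].
set K := B2 :\: I.
have hK : indep M K by apply: indep_sub hB2; exact: subsetDl.
have hKI : K \subset ~: I by rewrite /K setDE subsetIr.
case: (extend hK hKI) => K' [hK' hKK' hK'I eK'].
have rI : rank M (~: I) = rank M setT by apply/eqP; rewrite -indepDP.
have JK' : J :\: I \subset K'.
  apply/subsetP => x xJI; apply/negPn/negP => xK'.
  have := hall x; rewrite xJI /= indepDP => /negP; apply.
  rewrite eqn_leq rank_mono ?subsetT //= -rI -eK'; apply: indep_le_rank hK' _.
  apply/subsetP => y yK'; rewrite setCU inE (subsetP hK'I y yK') andbT.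
  rewrite in_setC in_set1; apply/negP => /eqP e.
  by rewrite -e yK' in xK'.
have dis : (J :\: I) :&: K = set0.
  apply/setP => x; rewrite !inE; apply/negP => /andP[/andP[_ xJ] /andP[_ xB]].
  by rewrite disjC in dJ; move: (subsetP dJ x xJ); rewrite inE xB.
have c1 : #|(J :\: I) :|: K| = #|J :\: I| + #|K| by rewrite cardsU dis cards0 subn0.
have c2 : #|(J :\: I) :|: K| <= #|K'| by apply: subset_leq_card; rewrite subUset JK' hKK'.
have c3 := cardsID I B2.
have c4 : #|B2 :&: I| <= #|I :\: J|.
  apply: subset_leq_card; apply/subsetP => x; rewrite !inE => /andP[xB ->]; rewrite andbT.
  by rewrite disjC in dJ; apply/negP => xJ; move: (subsetP dJ x xJ); rewrite inE xB.
have c5 := cardsID J I.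
have c6 := cardsID I J.
have c7 : #|I :&: J| = #|J :&: I| by rewrite setIC.
rewrite -/K in c3.
lia.
Qed.

Definition dualM : matroid n := @Matroid n (indepD M) indepD0 indepD_sub indepD_aug.

Lemma rankD_E X : rank dualM X = rk (indepD M) X. Proof. by []. Qed.

End Dual.

Lemma min_dep (n : nat) (ind : {set 'I_n.+1} -> bool) (Y : {set 'I_n.+1}) :
  ~~ ind Y -> exists2 C : {set 'I_n.+1}, C \subset Y & circuit_of ind C.
Proof.
move=> hY.
have P0 : (Y \subset Y) && ~~ ind Y by rewrite subxx.
case: (@arg_minnP _ Y (fun C : {set 'I_n.+1} => (C \subset Y) && ~~ ind C) (fun C => #|C|) P0) => C /andP[hCY hC] hmin.
exists C => //; rewrite /circuit_of hC /=; apply/forallP => D; apply/implyP => hD.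
apply/negPn/negP => hnD.
have := hmin D; rewrite hnD andbT (subset_trans (proper_sub hD) hCY) => /(_ isT).
by rewrite leqNgt (proper_card hD).
Qed.


Lemma card_sset (n : nat) (s : seq 'I_n.+1) : uniq s -> #|sset s| = size s.
Proof. by move=> u; rewrite /sset cardsE; apply/card_uniqP. Qed.

Lemma mem_sset (n : nat) (s : seq 'I_n.+1) x : (x \in sset s) = (x \in s).
Proof. by rewrite /sset inE. Qed.

Lemma sset_cat (n : nat) (s1 s2 : seq 'I_n.+1) : sset (s1 ++ s2) = sset s1 :|: sset s2.
Proof. by apply/setP => x; rewrite in_setU !mem_sset mem_cat. Qed.

Lemma dec_nth (n : nat) (s : seq 'I_n.+1) p q : sorted (fun x y : 'I_n.+1 => y <= x) s -> uniq s ->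
  p < q -> q < size s -> nth ord0 s q < nth ord0 s p.
Proof.
move=> hs us pq qs.
have tr : transitive (fun x y : 'I_n.+1 => y <= x) by move=> x y z h1 h2; exact: leq_trans h2 h1.
have := sorted_ltn_nth tr ord0 hs; rewrite /prop_in2 => h.
have ps : p < size s by lia.
have := h p q ps qs pq; rewrite leq_eqVlt => /orP[/eqP e|//].
by move: (nth_uniq ord0 ps qs us); rewrite (val_inj e) eqxx eq_sym => /esym/eqP; lia.
Qed.

Lemma inc_nth (n : nat) (s : seq 'I_n.+1) p q : sorted (fun x y : 'I_n.+1 => x <= y) s -> uniq s ->
  p < q -> q < size s -> nth ord0 s p < nth ord0 s q.
Proof.
move=> hs us pq qs.
have tr : transitive (fun x y : 'I_n.+1 => x <= y) by move=> x y z h1 h2; exact: leq_trans h1 h2.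
have := sorted_ltn_nth tr ord0 hs; rewrite /prop_in2 => h.
have ps : p < size s by lia.
have := h p q ps qs pq; rewrite leq_eqVlt => /orP[/eqP e|//].
by move: (nth_uniq ord0 ps qs us); rewrite (val_inj e) eqxx => /esym/eqP; lia.
Qed.

Section Main.
Variables (n r k : nat) (M : matroid n).
Hypothesis noloop : forall x, ~ is_loop M x.
Hypothesis nocoloop : forall x, ~ is_coloop M x.
Hypothesis hrank : rank M setT = r.+1.
Variable B : {set 'I_n.+1}.
Hypothesis hB : nbc_basis M B.
Hypothesis hk : #|IA M B| = k.+1.
Local Notation T := 'I_n.+1.
Local Notation MD := (dualM M).
Implicit Types (X Y F I J K : {set T}) (x y : T).

Lemma indB : indep M B. Proof. by case/andP: hB => /andP[]. Qed.
Lemma cardB : #|B| = r.+1. Proof. by case/andP: hB => /andP[_ /eqP ->]. Qed.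
Lemma rankB : rank M B = r.+1. Proof. by rewrite rank_indep ?indB ?cardB. Qed.

Lemma ind1 x : indep M [set x].
Proof. by have := @noloop x; rewrite /is_loop; case: (indep M [set x]). Qed.

Lemma indD1 x : indep MD [set x].
Proof.
case: (boolP [exists B', is_basis M B' && (x \notin B')]).
  case/existsP => B' /andP[hB' xB']; apply/existsP; exists B'; rewrite hB' /=.
  by rewrite disjC sub1set inE.
rewrite negb_exists => /forallP h; exfalso; apply: (@nocoloop x) => B' hB'.
by have := h B'; rewrite hB' /= negbK.
Qed.

Lemma indD_of X : X \subset ~: B -> indep MD X.
Proof.
move=> h; apply/existsP; exists B; rewrite disjC h andbT.
by case/andP: hB.
Qed.

Lemma rankDT : rank MD setT = n - r.
Proof.
apply/anti_leq/andP; split.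
  case: (rank_witness MD setT) => I /andP[/existsP[B' /andP[/andP[_ /eqP eB'] dis]] _] <-.
  rewrite disjC in dis; have := subset_leq_card dis; have := cardsC B'.
  rewrite card_ord eB' hrank; lia.
have := indep_le_rank (indD_of (subxx _)) (subsetT (~: B)).
have := cardsC B; rewrite card_ord cardB; lia.
Qed.

Lemma rankT_le X : rank M X <= r.+1.
Proof. by rewrite -hrank rank_mono ?subsetT. Qed.
Lemma rankDT_le X : rank MD X <= n - r.
Proof. by rewrite -rankDT rank_mono ?subsetT. Qed.

Lemma cl0 : cl M set0 = set0. Proof. exact: cl0_noloop ind1. Qed.
Lemma clD0 : clD M set0 = set0. Proof. exact: (cl0_noloop (M := MD)) indD1. Qed.

Variable b0 : T.
Hypothesis b0nB : b0 \notin B.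
Hypothesis b0min : forall y, y \notin B -> b0 <= y.

Lemma TBP x : (x \in T_B B) = (x \notin B) && (x != b0).
Proof.
rewrite /T_B inE in_setC; case: (boolP (x \in B)) => //= xB.
apply/existsP/idP.
  case=> y /andP[yB lt]; rewrite inE in yB.
  by apply/eqP => e; have := b0min yB; rewrite -e; lia.
move=> ne; exists b0; rewrite inE b0nB /=.
have := b0min xB; rewrite leq_eqVlt => /orP[/eqP e|//].
by move: ne; rewrite (val_inj e) eqxx.
Qed.

Definition Z := b0 |: B.
Definition D := [set x in Z | rank M (Z :\ x) == r.+1].

Lemma indD_T : indep MD (T_B B).
Proof. by apply: indD_of; apply/subsetP => x; rewrite TBP inE => /andP[]. Qed.

Lemma clDT x : (x \in clD M (T_B B)) = (x \notin D).
Proof.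
case: (boolP (x \in T_B B)) => xT.
  rewrite (subsetP (cl_sub MD (T_B B)) x xT); move: xT; rewrite TBP inE => /andP[xB xb].
  by rewrite /Z !inE (negPf xB) (negPf xb).
have eZ : ~: (x |: T_B B) = Z :\ x.
  apply/setP => y; rewrite in_setC in_setU1 TBP /Z !inE; case: (y =P x) => //= _.
  by case: (y \in B); case: (y == b0).
have xZ : x \in Z by move: xT; rewrite TBP /Z in_setU1 negb_and !negbK => /orP[->|/eqP->]; rewrite ?eqxx ?orbT.
have rT := rank_indep indD_T.
change (clD M (T_B B)) with (cl MD (T_B B)); rewrite clP rT.
rewrite /D inE xZ /=.
case: (boolP (indep MD (x |: T_B B))) => hI.
  rewrite rank_indep // cardsU1 xT /= eqn_leq ltnn /=.
  by move: hI; rewrite /= indepDP eZ hrank => ->.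
have hI' := hI; rewrite /= indepDP eZ hrank in hI'; rewrite hI' /=.
have h1 := rank_U1 MD x (T_B B); have h2 := rank_U1_ge MD x (T_B B).
have h3 : rank MD (x |: T_B B) != #|x |: T_B B|.
  by apply: contra hI => /eqP; exact: rank_indepP.
move: h3; rewrite cardsU1 xT /= add1n => h3; rewrite rT in h1 h2.
apply/eqP/anti_leq; rewrite h2 andbT -ltnS ltn_neqAle h3; exact: h1.
Qed.

Lemma DZ : D \subset Z. Proof. by apply/subsetP => x; rewrite inE => /andP[]. Qed.

Lemma cardZ : #|Z| = r.+2. Proof. by rewrite /Z cardsU1 b0nB cardB. Qed.

Lemma rankZ : rank M Z = r.+1.
Proof.
apply/anti_leq; rewrite rankT_le /= -{1}rankB; apply: rank_mono; exact: subsetUr.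
Qed.

Lemma b0D : b0 \in D.
Proof.
rewrite inE /Z setU1K ?b0nB // rankB eqxx andbT; exact: setU11.
Qed.

Lemma U1_rank_cases x X : rank M (x |: X) != rank M X -> rank M (x |: X) = (rank M X).+1.
Proof.
move=> h; apply/anti_leq; rewrite rank_U1 /= ltn_neqAle eq_sym h; exact: rank_U1_ge.
Qed.

Lemma b0_cl Y : Y \subset B -> D :&: B \subset Y -> b0 \in cl M Y.
Proof.
move=> hYB hDY.
have hY : indep M Y by apply: indep_sub indB.
have b0Y : b0 \notin Y by apply: contra b0nB => h; exact: (subsetP hYB).
rewrite clP; apply/negPn/negP => /U1_rank_cases e.
have hbY : indep M (b0 |: Y) by apply: rank_indepP; rewrite e cardsU1 b0Y rank_indep.
have sub : b0 |: Y \subset Z by rewrite /Z; apply: setUS.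
case: (extend hbY sub) => J [hJ hbJ hJZ eJ].
have : ~~ (Z \subset J) by apply/negP => /subset_leq_card; rewrite cardZ eJ rankZ ltnn.
case/subsetPn => x xZ xJ.
have xD : x \in D.
  rewrite inE xZ /=; apply/eqP/anti_leq; rewrite rankT_le /= -rankZ -eJ.
  apply: indep_le_rank hJ _; apply/subsetP => y yJ; rewrite in_setD1 (subsetP hJZ y yJ) andbT.
  by apply/negP => /eqP e'; rewrite -e' yJ in xJ.
have xb : x != b0 by apply/negP => /eqP e'; rewrite e' (subsetP hbJ b0 (setU11 _ _)) in xJ.
have xB : x \in B by move: xZ; rewrite /Z in_setU1 (negPf xb).
have xY : x \in Y by apply: (subsetP hDY); rewrite inE xD xB.
by rewrite (subsetP hbJ x (subsetP (subsetUr _ _) x xY)) in xJ.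
Qed.

Lemma IA_lt a : a \in B -> a < b0 -> a \in IA M B.
Proof.
move=> aB ab.
set W := ~: B :|: [set a].
have hW : ~~ indep MD W.
  apply/negP => /existsP[B' /andP[/andP[hB' /eqP eB'] dis]].
  rewrite disjoint_sym disjC in dis.
  have : B' \subset B :\ a.
    apply/subsetP => y yB; move: (subsetP dis y yB); rewrite /W !inE negb_or negbK.
    by case/andP => -> ->.
  move/subset_leq_card; rewrite eB' hrank; have := cardsD1 a B; rewrite aB cardB; lia.
case: (min_dep hW) => C hCW hC.
have hC' : cocircuit M C := hC.
rewrite inE aB /=; apply/existsP; exists C; rewrite hC' hCW /=.
have aC : a \in C.
  apply/negPn/negP => aC; case/andP: hC => hC _; move/negP: hC; apply.
  apply: (indep_sub (A := ~: B)); last exact: indD_of.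
  apply/subsetP => y yC; move: (subsetP hCW y yC); rewrite /W !inE.
  by case/orP => // /eqP e; rewrite -e yC in aC.
rewrite aC /=; apply/forallP => y; apply/implyP => yC.
move: (subsetP hCW y yC); rewrite /W !inE => /orP[yB|/eqP ->//].
exact: leq_trans (ltnW ab) (b0min yB).
Qed.

Lemma exD : exists2 a, a \in D & (a \in B) && (a < b0).
Proof.
case: (boolP [exists a in D, (a \in B) && (a < b0)]).
  by case/existsP => a /andP[h1 h2]; exists a.
rewrite negb_exists => /forallP hall.
have hZ : ~~ indep M Z.
  by apply/negP => /rank_indep; rewrite rankZ cardZ; lia.
case: (min_dep hZ) => C hCZ hC.
have hCi : forall X, X \proper C -> indep M X.
  by move=> X hX; case/andP: hC => _ /forallP /(_ X) /implyP; apply.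
have b0C : b0 \in C.
  apply/negPn/negP => bC; case/andP: hC => hC _; move/negP: hC; apply.
  apply: indep_sub indB; apply/subsetP => y yC; move: (subsetP hCZ y yC); rewrite /Z in_setU1.
  by case/orP => // /eqP e; rewrite -e yC in bC.
have CD : C \subset D.
  apply/subsetP => x xC; case: (x =P b0) => [->|/eqP xb]; first exact: b0D.
  have xB : x \in B by move: (subsetP hCZ x xC); rewrite /Z in_setU1 (negPf xb).
  rewrite inE (subsetP hCZ x xC) /=; apply/eqP/anti_leq; rewrite rankT_le /=.
  have hCx := hCi _ (properD1 xC).
  have sub : C :\ x \subset Z :\ x by apply: setSD.
  case: (extend hCx sub) => J [hJ hCJ hJZ eJ].
  rewrite -eJ leqNgt; apply/negP => lt.
  rewrite -cardB in lt.
  case: (indep_aug hJ indB lt) => y /setDP[yB yJ] hyJ.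
  case: (y =P x) => [e|/eqP yx].
    case/andP: hC => hC _; move/negP: hC; apply; apply: indep_sub hyJ.
    apply/subsetP => z zC; rewrite in_setU1; case: (z =P y) => //= /eqP zy.
    by apply: (subsetP hCJ); rewrite in_setD1 zC andbT -e.
  have : y |: J \subset Z :\ x.
    rewrite subUset hJZ andbT sub1set in_setD1 yx /Z /=; exact: setU1r.
  by move/(indep_le_rank hyJ); rewrite cardsU1 yJ /= add1n eJ ltnn.
have : b0 \in EA M B.
  rewrite inE in_setC b0nB /=; apply/existsP; exists C; rewrite (hC : circuit M C) b0C /=.
  rewrite setUC hCZ /=; apply/forallP => y; apply/implyP => yC.
  case: (y =P b0) => [->//|/eqP yb].
  have yB : y \in B by move: (subsetP hCZ y yC); rewrite /Z in_setU1 (negPf yb).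
  by have := hall y; rewrite (subsetP CD y yC) yB /= => h; rewrite leqNgt.
by case/andP: hB => _ /eqP ->; rewrite inE.
Qed.

Lemma cseq_uniq : uniq (cseq M B).
Proof. by rewrite /cseq sort_uniq enum_uniq. Qed.
Lemma mem_cseq x : (x \in cseq M B) = (x \in IA M B).
Proof. by rewrite /cseq mem_sort mem_enum. Qed.
Lemma size_cseq : size (cseq M B) = k.+1.
Proof. by rewrite /cseq size_sort -cardE hk. Qed.
Lemma cseq_sorted : sorted (fun x y : T => y <= x) (cseq M B).
Proof. by apply: sort_sorted => x y; exact: leq_total. Qed.

Lemma IAB : IA M B \subset B.
Proof. by apply/subsetP => x; rewrite inE => /andP[]. Qed.

Lemma idx_lt x y : x \in IA M B -> y \in IA M B ->
  index x (cseq M B) < index y (cseq M B) -> y < x.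
Proof.
move=> xI yI lt; rewrite -!mem_cseq in xI yI.
rewrite -(nth_index ord0 xI) -(nth_index ord0 yI).
apply: dec_nth cseq_sorted cseq_uniq lt _; by rewrite index_mem.
Qed.

Lemma idx_le x y : x \in IA M B -> y \in IA M B -> x <= y ->
  index y (cseq M B) <= index x (cseq M B).
Proof. by move=> xI yI le; rewrite leqNgt; apply/negP => /(idx_lt xI yI); lia. Qed.

Lemma c_in j : 1 <= j <= k.+1 -> c M B j \in IA M B.
Proof. by move=> h; rewrite -mem_cseq /c; apply: mem_nth; rewrite size_cseq; lia. Qed.

Lemma c_idx j : 1 <= j <= k.+1 -> index (c M B j) (cseq M B) = j.-1.
Proof. by move=> h; rewrite /c index_uniq ?cseq_uniq // size_cseq; lia. Qed.

Lemma mem_cfirst x m : (x \in cfirst M B m) = (x \in IA M B) && (index x (cseq M B) < m).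
Proof.
rewrite /cfirst mem_sset -mem_cseq.
case: (boolP (x \in cseq M B)) => h; first exact: in_take.
by apply/negP => /mem_take; rewrite (negPf h).
Qed.

Lemma cfirstIA m : cfirst M B m \subset IA M B.
Proof. by apply/subsetP => x; rewrite mem_cfirst => /andP[]. Qed.

Lemma card_cfirst m : #|cfirst M B m| = minn m k.+1.
Proof. by rewrite /cfirst card_sset ?take_uniq ?cseq_uniq // size_take_min size_cseq. Qed.

Lemma S_sub : S_B M B \subset B. Proof. exact: subsetDl. Qed.

Lemma card_S : #|S_B M B| = r - k.
Proof. by rewrite /S_B cardsD (setIidPr IAB) cardB hk. Qed.

Lemma SC_sub m : S_B M B :|: cfirst M B m \subset B.
Proof. by rewrite subUset S_sub (subset_trans (cfirstIA m) IAB). Qed.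

Lemma card_SC m : #|S_B M B :|: cfirst M B m| = r - k + minn m k.+1.
Proof.
rewrite cardsU card_S card_cfirst.
have -> : S_B M B :&: cfirst M B m = set0.
  apply/setP => x; rewrite in_set0 in_setI mem_cfirst /S_B in_setD; by case: (x \in IA M B); rewrite ?andbF.
by rewrite cards0 subn0.
Qed.

Lemma rank_F m : rank M (cl M (S_B M B :|: cfirst M B m)) = r - k + minn m k.+1.
Proof. by rewrite rank_cl rank_indep ?card_SC //; apply: indep_sub indB; exact: SC_sub. Qed.

Variable a0 : T.
Hypothesis a0IA : a0 \in IA M B.
Hypothesis a0D : a0 \in D.
Hypothesis a0min : forall y, y \in IA M B -> y \in D -> a0 <= y.

Definition i0 := (index a0 (cseq M B)).+1.

Lemma i0_range : 1 <= i0 <= k.+1.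
Proof. by rewrite /i0 ltnS -size_cseq index_mem mem_cseq a0IA. Qed.

Lemma c_i0 : c M B i0 = a0.
Proof. by rewrite /c /i0 /= nth_index // mem_cseq. Qed.

Lemma a0_notF m : m < i0 -> a0 \notin cl M (S_B M B :|: cfirst M B m) :|: clD M (T_B B).
Proof.
move=> lt; rewrite in_setU clDT a0D orbF.
apply: (indep_notin_cl indB (SC_sub m)); first exact: (subsetP IAB).
rewrite in_setU mem_cfirst a0IA /= negb_or; apply/andP; split.
  by rewrite /S_B in_setD a0IA.
by rewrite -ltnNge.
Qed.

Lemma F_full m : i0 <= m -> cl M (S_B M B :|: cfirst M B m) :|: clD M (T_B B) = setT.
Proof.
move=> le; apply/setP => x; rewrite in_setT in_setU clDT.
case: (boolP (x \in D)) => xD; rewrite ?orbT // orbF.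
have DY : D :&: B \subset S_B M B :|: cfirst M B m.
  apply/subsetP => y; rewrite inE => /andP[yD yB]; rewrite in_setU /S_B in_setD yB andbT.
  case: (boolP (y \in IA M B)) => //= yI.
  rewrite mem_cfirst yI /=; have := idx_le a0IA yI (a0min yI yD); rewrite /i0 in le; lia.
have := subsetP DZ x xD; rewrite /Z in_setU1 => /orP[/eqP ->|xB].
  exact: b0_cl (SC_sub m) DY.
by apply: (subsetP (cl_sub _ _)); apply: (subsetP DY); rewrite inE xD xB.
Qed.

Lemma part1 :
  [/\ 1 <= i0 <= k.+1 /\ c M B i0 \notin cl M (S_B M B) :|: clD M (T_B B),
        (forall j, i0 < j <= k.+1 -> c M B j \in cl M (S_B M B) :|: clD M (T_B B)),
        cl M (S_B M B :|: cfirst M B i0) :|: clD M (T_B B) = setT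
      & (forall j, 1 <= j < i0 -> cl M (S_B M B :|: cfirst M B j) :|: clD M (T_B B) != setT)].
Proof.
split.
- split; first exact: i0_range.
  have h0 : 0 < i0 by case/andP: i0_range.
  rewrite c_i0; have := a0_notF h0; apply: contra.
  rewrite !in_setU => /orP[h|->]; last by rewrite orbT.
  by apply/orP; left; apply: (subsetP (cl_mono _ (subsetUl _ _))).
- move=> j hj; have jr : 1 <= j <= k.+1 by case/andP: i0_range => ? ?; lia.
  rewrite in_setU clDT; apply/orP; right; apply/negP => cD.
  have := a0min (c_in jr) cD; rewrite leqNgt => /negP; apply.
  apply: idx_lt (c_in jr) _; first exact: a0IA.
  by rewrite c_idx //; rewrite /i0 in hj; lia.
- exact: F_full.
- move=> j hj; apply/negP => /eqP e.
  have hj' : j < i0 by case/andP: hj.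
  by have := a0_notF hj'; rewrite e in_setT.
Qed.

Definition s0 := r - k + i0.

Lemma k_le_r : k <= r.
Proof. have := subset_leq_card IAB; rewrite hk cardB; lia. Qed.

Lemma n_ge : r.+1 <= n.
Proof.
have := cardsC B; rewrite card_ord cardB.
have : 0 < #|~: B| by apply/card_gt0P; exists b0; rewrite inE.
lia.
Qed.

Lemma s0_range : r - k < s0 <= r.+1.
Proof. have := i0_range; have := k_le_r; rewrite /s0; lia. Qed.

Definition sS := sort (fun x y : T => y <= x) (enum (S_B M B)).
Definition sT := sort (fun x y : T => x <= y) (enum (T_B B)).
Definition sSc := sS ++ cseq M B.

Lemma eseqE : eseq M B = sS ++ sT. Proof. by []. Qed.
Lemma sS_uniq : uniq sS. Proof. by rewrite /sS sort_uniq enum_uniq. Qed.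
Lemma sT_uniq : uniq sT. Proof. by rewrite /sT sort_uniq enum_uniq. Qed.
Lemma mem_sS x : (x \in sS) = (x \in S_B M B). Proof. by rewrite /sS mem_sort mem_enum. Qed.
Lemma mem_sT x : (x \in sT) = (x \in T_B B). Proof. by rewrite /sT mem_sort mem_enum. Qed.
Lemma size_sS : size sS = r - k. Proof. by rewrite /sS size_sort -cardE card_S. Qed.

Lemma card_T : #|T_B B| = n - r.+1.
Proof.
have -> : T_B B = ~: B :\ b0.
  by apply/setP => x; rewrite TBP in_setD1 in_setC andbC.
have h1 := cardsC B; have h2 := cardsD1 b0 (~: B); rewrite inE b0nB /= in h2.
rewrite card_ord cardB in h1; set t := #|~: B :\ b0| in h2 *; set u := #|~: B| in h1 h2; lia.
Qed.

Lemma size_sT : size sT = n - r.+1. Proof. by rewrite /sT size_sort -cardE card_T. Qed.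
Lemma sset_sS : sset sS = S_B M B. Proof. by apply/setP => x; rewrite mem_sset mem_sS. Qed.
Lemma sset_sT : sset sT = T_B B. Proof. by apply/setP => x; rewrite mem_sset mem_sT. Qed.

Lemma sSc_uniq : uniq sSc.
Proof.
rewrite /sSc cat_uniq sS_uniq cseq_uniq andbT /=; apply/hasPn => x.
by rewrite mem_cseq mem_sS /S_B in_setD => ->.
Qed.

Lemma size_sSc : size sSc = r.+1.
Proof. rewrite /sSc size_cat size_sS size_cseq; have := k_le_r; lia. Qed.

Lemma sSc_B j : sset (take j sSc) \subset B.
Proof.
apply/subsetP => x; rewrite mem_sset => /mem_take; rewrite /sSc mem_cat mem_sS mem_cseq.
by case/orP => h; [exact: (subsetP S_sub) | exact: (subsetP IAB)].
Qed.

Lemma take_sSc_ge j : r - k <= j -> sset (take j sSc) = S_B M B :|: cfirst M B (j - (r - k)).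
Proof.
move=> h; rewrite /sSc take_cat size_sS ltnNge h /= sset_cat sset_sS; by [].
Qed.

Lemma take_eseq j : j <= r - k -> take j (eseq M B) = take j sSc.
Proof.
move=> h; rewrite eseqE /sSc !take_cat size_sS; case: ltnP => // h'.
have -> : j - (r - k) = 0 by lia.
by rewrite !take0.
Qed.

Lemma rank_take j : rank M (cl M (sset (take j sSc))) = minn j r.+1.
Proof.
rewrite rank_cl rank_indep; last exact: indep_sub (sSc_B j) indB.
by rewrite card_sset ?take_uniq ?sSc_uniq // size_take_min size_sSc.
Qed.

Lemma full_M X : flat M X -> rank M X = r.+1 -> X = setT.
Proof. by move=> hX e; apply: flat_eq hX (subsetT X) _; rewrite e hrank. Qed.

Lemma full_MD X : flat MD X -> rank MD X = n - r -> X = setT.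
Proof. by move=> hX e; apply: flat_eq hX (subsetT X) _; rewrite e rankDT. Qed.

Lemma Fj j : (FGplus M B r k i0 j).1 = cl M (sset (take j sSc)).
Proof.
rewrite /FGplus; case: ifP => h1 /=; first by rewrite take_eseq.
case: ifP => h2 /=; first by rewrite take_sSc_ge //; lia.
apply/esym/full_M; first exact: flat_cl.
by rewrite rank_take; apply/minn_idPr; lia.
Qed.

Lemma Fj_ge j : r - k <= j -> (FGplus M B r k i0 j).1 = cl M (S_B M B :|: cfirst M B (j - (r - k))).
Proof. by move=> h; rewrite Fj take_sSc_ge. Qed.

Definition Wj j := sset (drop (maxn j r.+1 - r.+1) sT).

Lemma Wj_sub j : Wj j \subset T_B B.
Proof. by apply/subsetP => x; rewrite mem_sset => /mem_drop; rewrite mem_sT. Qed.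

Lemma card_Wj j : #|Wj j| = n - r.+1 - (maxn j r.+1 - r.+1).
Proof. by rewrite card_sset ?drop_uniq ?sT_uniq // size_drop size_sT. Qed.

Lemma Wj_small j : j <= r.+1 -> Wj j = T_B B.
Proof. by move=> h; rewrite /Wj (maxn_idPr h) subnn drop0 sset_sT. Qed.

Lemma indD_sub_T X : X \subset T_B B -> indep MD X.
Proof.
move=> h; apply: indD_of; apply: (subset_trans h); apply/subsetP => x.
by rewrite TBP inE => /andP[].
Qed.

Lemma rank_Wj j : rank MD (clD M (Wj j)) = n - r.+1 - (maxn j r.+1 - r.+1).
Proof.
change (clD M (Wj j)) with (cl MD (Wj j)).
by rewrite rank_cl rank_indep ?card_Wj //; apply: indD_sub_T; exact: Wj_sub.
Qed.

Lemma Gj j : (FGplus M B r k i0 j).2 = if j < s0 then setT else clD M (Wj j).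
Proof.
have := s0_range; have := k_le_r; have := i0_range => hi hkr hs.
rewrite /s0 in hs *; rewrite /FGplus; case: ifP => h1 /=; first by rewrite ifT //; lia.
case: ifP => h2 /=.
  rewrite Wj_small; last by lia.
  by case: ifP => h3; case: ifP => h4 //; lia.
rewrite ifF; last by lia.
rewrite /Wj eseqE drop_cat size_sS ifF; last by lia.
congr (clD M (sset (drop _ sT))); lia.
Qed.

Definition phi (p : {set T} * {set T}) := rank M p.1 + (n - r) - rank MD p.2.

Lemma phi_FG j : 1 <= j <= n.-1 -> phi (FGplus M B r k i0 j) = if j < s0 then j else j.+1.
Proof.
move=> hj; have := s0_range; have := n_ge => hn hs.
rewrite /s0 in hs *; rewrite /phi Fj Gj rank_take; case: ifP => js.
  rewrite rankDT; rewrite /s0 in js; lia.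
rewrite rank_Wj; rewrite /s0 in js; lia.
Qed.

Lemma ne0_of_rank (N : matroid n) X : 0 < rank N X -> X != set0.
Proof.
move=> h; apply/negP => /eqP e; move: h; rewrite e.
by have := rank_le_card N set0; rewrite cards0; case: (rank N set0).
Qed.

Lemma setT_ne0 : [set: T] != set0.
Proof. by apply/set0Pn; exists ord0; rewrite inE. Qed.

Lemma n_gt : s0 <= n.-1 -> r.+1 < n.
Proof.
move=> hs; have := n_ge; rewrite leq_eqVlt => /orP[/eqP e|//].
have T0 : T_B B = set0 by apply: cards0_eq; rewrite card_T -e subnn.
have := F_full (leqnn i0); rewrite T0 clD0 setU0 => hF.
have := rank_F i0; rewrite hF hrank; have := i0_range; rewrite /s0 in hs; lia.
Qed.

Lemma FG_notTT j : 1 <= j <= n.-1 ->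
  ~~ (((FGplus M B r k i0 j).1 == setT) && ((FGplus M B r k i0 j).2 == setT)).
Proof.
move=> hj; have := s0_range; have := n_ge => hn hs.
case: (leqP j r) => jr.
  apply/negP => /andP[/eqP e _]; move: (rank_take j); rewrite -Fj e hrank; lia.
apply/negP => /andP[_ /eqP e]; move: e; rewrite Gj ifF; last by apply/negbTE; rewrite -leqNgt; lia.
move=> e; move: (rank_Wj j); rewrite e rankDT; lia.
Qed.

Lemma FG_U j : (FGplus M B r k i0 j).1 :|: (FGplus M B r k i0 j).2 == setT.
Proof.
have := s0_range; have := k_le_r; have := i0_range => hi hkr hs.
rewrite Gj; case: ifP => js; first by rewrite setUT.
have js' : s0 <= j by rewrite leqNgt js.
rewrite /s0 in js'.
case: (leqP j r) => jr.
  rewrite Wj_small; last by lia.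
  rewrite Fj_ge; last by lia.
  by rewrite F_full //; lia.
rewrite Fj (full_M (flat_cl _ _)); first by rewrite setTU.
by rewrite rank_take; lia.
Qed.

Lemma FG_biflat j : 1 <= j <= n.-1 -> biflat M (FGplus M B r k i0 j).
Proof.
move=> hj.
have hG0 : (FGplus M B r k i0 j).2 != set0.
  have := s0_range; have := n_ge; have := k_le_r; have := i0_range => hi hkr hn hs.
  rewrite Gj; case: ifP => js; first exact: setT_ne0.
  have hgt : r.+1 < n by apply: n_gt; lia.
  apply: (ne0_of_rank (N := MD)); change (clD M (Wj j)) with (cl MD (Wj j)).
  rewrite rank_cl rank_indep; last by apply: indD_sub_T; exact: Wj_sub.
  rewrite card_Wj; lia.
have hF0 : (FGplus M B r k i0 j).1 != set0.
  by apply: (ne0_of_rank (N := M)); rewrite Fj rank_take; case/andP: hj => h _; rewrite leq_min h.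
have hF : flat M (FGplus M B r k i0 j).1 by rewrite Fj; exact: flat_cl.
have hG : flatD M (FGplus M B r k i0 j).2.
  by rewrite Gj; case: ifP => _; [exact: (flat_setT MD) | exact: (flat_cl MD)].
by rewrite /biflat hF hG hF0 hG0 (FG_notTT hj) FG_U.
Qed.

Lemma FG_mono j j' : j <= j' ->
  (FGplus M B r k i0 j).1 \subset (FGplus M B r k i0 j').1 /\
  (FGplus M B r k i0 j').2 \subset (FGplus M B r k i0 j).2.
Proof.
move=> jj; split.
  rewrite !Fj; apply: cl_mono; apply/subsetP => x; rewrite !mem_sset.
  by rewrite -(take_takel _ jj) => /mem_take.
rewrite !Gj; case: ifP => h1; first by rewrite ifT //; lia.
case: ifP => h2; first exact: subsetT.
apply: (cl_mono MD); apply/subsetP => x; rewrite /Wj !mem_sset.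
set d := maxn j r.+1 - r.+1; set d' := maxn j' r.+1 - r.+1.
have -> : d' = (d' - d) + d by rewrite /d /d'; lia.
by rewrite -drop_drop => /mem_drop.
Qed.

Lemma FG_compat j j' : compatible (FGplus M B r k i0 j) (FGplus M B r k i0 j').
Proof.
rewrite /compatible; case: (leqP j j') => h.
  by case: (FG_mono h) => -> ->.
by case: (FG_mono (ltnW h)) => -> ->; rewrite orbT.
Qed.

Definition FL := cl M (S_B M B :|: cfirst M B i0.-1).
Definition FU := cl M (S_B M B :|: cfirst M B i0).

Lemma FG_union j : (FGplus M B r k i0 j).1 :&: (FGplus M B r k i0 j).2 \subset FL :|: clD M (T_B B).
Proof.
have := s0_range; have := i0_range => hi hs.
rewrite Gj; case: ifP => js.
  rewrite setIT; apply: subset_trans (subsetUl _ _).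
  rewrite Fj /FL; have e : i0.-1 = s0.-1 - (r - k) by rewrite /s0; lia.
  rewrite e -take_sSc_ge; last by rewrite /s0; lia.
  apply: cl_mono; apply/subsetP => x; rewrite !mem_sset.
  rewrite -(take_takel _ (_ : j <= s0.-1)); last by lia.
  by move/mem_take.
apply: subset_trans (subsetIr _ _) _; apply: subset_trans (subsetUr _ _).
exact: (cl_mono MD (Wj_sub j)).
Qed.

Definition PP := [set FGplus M B r k i0 j.+1 | j : 'I_n.-1].

Lemma memPP p : p \in PP -> exists2 j, 1 <= j <= n.-1 & p = FGplus M B r k i0 j.
Proof. by case/imsetP => j _ ->; exists j.+1 => //; rewrite ltn_ord. Qed.

Lemma FG_PP j : 1 <= j <= n.-1 -> FGplus M B r k i0 j \in PP.
Proof.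
move=> hj; have hj' : j.-1 < n.-1 by lia.
have -> : j = (Ordinal hj').+1 by rewrite /=; lia.
by apply: imset_f; rewrite inE.
Qed.

Lemma a0_notFL : a0 \notin FL :|: clD M (T_B B).
Proof. by apply: a0_notF; have := i0_range; lia. Qed.

Lemma PP_biflag : biflag M PP.
Proof.
apply/and3P; split.
- by apply/forall_inP => p /memPP[j hj ->]; exact: FG_biflat.
- apply/forall_inP => p /memPP[j hj ->]; apply/forall_inP => q /memPP[j' hj' ->].
  exact: FG_compat.
- apply/negP => /eqP e.
  have : \bigcup_(p in PP) (p.1 :&: p.2) \subset FL :|: clD M (T_B B).
    by apply/bigcupsP => p /memPP[j hj ->]; exact: FG_union.
  rewrite e => /subsetP /(_ a0); rewrite in_setT => /(_ isT).
  by rewrite (negPf a0_notFL).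
Qed.

Lemma card_PP : #|PP| = n.-1.
Proof.
rewrite /PP card_imset ?cardsT ?card_ord //.
move=> j1 j2 e; apply: val_inj => /=.
have := congr1 phi e; rewrite !phi_FG; try by rewrite ltn_ord.
by case: ifP; case: ifP; lia.
Qed.

Lemma biflat_parts p : biflat M p ->
  [/\ flat M p.1, flatD M p.2, p.1 != set0, p.2 != set0 & p.1 :|: p.2 == setT].
Proof. by case/and5P => ? ? ? ? /andP[_ ?]. Qed.

Lemma biflat_ranks p : biflat M p ->
  [/\ 0 < rank M p.1, rank M p.1 <= r.+1, 0 < rank MD p.2 & rank MD p.2 <= n - r].
Proof.
case/biflat_parts => _ _ h1 h2 _; split; [| exact: rankT_le | | exact: rankDT_le].
  by case/set0Pn: h1 => x xp; apply: rank_pos_noloop (ind1 x) xp.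
by case/set0Pn: h2 => x xp; apply: (rank_pos_noloop (M := MD)) (indD1 x) xp.
Qed.

Lemma phi_le p q : biflat M p -> biflat M q -> p.1 \subset q.1 -> q.2 \subset p.2 ->
  phi p <= phi q /\ (phi p = phi q -> p = q).
Proof.
move=> hp hq h1 h2.
have r1 := rank_mono M h1; have r2 := rank_mono MD h2.
case: (biflat_ranks hp) => a1 a2 a3 a4; case: (biflat_ranks hq) => b1 b2 b3 b4.
rewrite /phi; split; first lia.
move=> e.
have e1 : rank M q.1 <= rank M p.1 by lia.
have e2 : rank MD p.2 <= rank MD q.2 by lia.
case/biflat_parts: hp => fp1 fp2 _ _ _; case/biflat_parts: hq => fq1 fq2 _ _ _.
have E1 := flat_eq fp1 h1 e1; have E2 := flat_eq (M := MD) fq2 h2 e2.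
by case: p q E1 E2 {h1 h2 r1 r2 a1 a2 a3 a4 b1 b2 b3 b4 e e1 e2 fp1 fp2 fq1 fq2} => [p1 p2] [q1 q2] /= -> ->.
Qed.

Lemma phi_inj p q : biflat M p -> biflat M q -> compatible p q -> phi p = phi q -> p = q.
Proof.
move=> hp hq /orP[/andP[h1 h2]|/andP[h1 h2]] e.
  by case: (phi_le hp hq h1 h2) => _; apply.
by case: (phi_le hq hp h1 h2) => _ h; rewrite h.
Qed.

Lemma phi_lt p q : biflat M p -> biflat M q -> compatible p q -> phi p < phi q ->
  p.1 \subset q.1 /\ q.2 \subset p.2.
Proof.
move=> hp hq /orP[/andP[h1 h2]|/andP[h1 h2]] lt //.
by case: (phi_le hq hp h1 h2) => h _; lia.
Qed.

Lemma rank_FL : rank M FL = s0.-1.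
Proof. rewrite /FL rank_F /s0; have := i0_range; lia. Qed.
Lemma rank_FU : rank M FU = s0.
Proof. rewrite /FU rank_F /s0; have := i0_range; lia. Qed.
Lemma rank_clDT : rank MD (clD M (T_B B)) = n - r.+1.
Proof.
change (clD M (T_B B)) with (cl MD (T_B B)).
by rewrite rank_cl rank_indep ?card_T //; exact: indD_T.
Qed.

Lemma PP_max Q : biflag M Q -> PP \subset Q -> Q = PP.
Proof.
move=> hQ PQ; apply/eqP; rewrite eqEsubset PQ andbT; apply/subsetP => q qQ.
apply/negPn/negP => qP.
case/and3P: hQ => /forall_inP hb /forall_inP hc hU.
have hq := hb q qQ.
have hcomp : forall p, p \in PP -> compatible p q.
  by move=> p pP; move/forall_inP: (hc p (subsetP PQ p pP)); apply.
have := s0_range; have := n_ge; have := i0_range => hi hn hs.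
case: (biflat_ranks hq) => q1 q2 q3 q4.
have phiq : phi q = s0.
  apply/eqP; rewrite eqn_leq; apply/andP; split; rewrite leqNgt; apply/negP => lt.
    have hj : 1 <= (phi q).-1 <= n.-1 by clear -lt hs hn q2 q3 q4; rewrite /phi in lt *; lia.
    have pP := FG_PP hj.
    have := phi_FG hj; rewrite ifF; last by apply/negbTE; rewrite -leqNgt; clear -lt; lia.
    have -> : ((phi q).-1).+1 = phi q by clear -lt; lia.
    move=> e; have := phi_inj (FG_biflat hj) hq (hcomp _ pP) e.
    by move=> E; rewrite -E pP in qP.
  have hj : 1 <= phi q <= n.-1 by clear -lt hs hn q1 q4; rewrite /phi in lt *; lia.
  have pP := FG_PP hj.
  have := phi_FG hj; rewrite lt => e.
  have := phi_inj (FG_biflat hj) hq (hcomp _ pP) e.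
  by move=> E; rewrite -E pP in qP.
have lower : FL \subset q.1.
  case: (leqP s0 1) => s1.
    have e0 : S_B M B :|: cfirst M B i0.-1 = set0.
      by apply: cards0_eq; rewrite card_SC; clear -s1 hi; rewrite /s0 in s1; lia.
    by rewrite /FL e0 cl0 sub0set.
  have hj : 1 <= s0.-1 <= n.-1 by clear -s1 hs hn; lia.
  have pP := FG_PP hj.
  have := phi_FG hj; rewrite ifT; last by clear -s1; lia.
  move=> e; have lt : phi (FGplus M B r k i0 s0.-1) < phi q by rewrite e phiq; clear -s1; lia.
  case: (phi_lt (FG_biflat hj) hq (hcomp _ pP) lt) => h _.
  rewrite Fj_ge in h; last by clear -hs; lia.
  rewrite /FL; by have -> : i0.-1 = s0.-1 - (r - k) by rewrite /s0; clear -hi; lia.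
have upper : q.1 \subset FU /\ clD M (T_B B) \subset q.2.
  case: (leqP s0 n.-1) => sn.
    have hj : 1 <= s0 <= n.-1 by clear -hs sn; lia.
    have pP := FG_PP hj.
    have := phi_FG hj; rewrite ltnn => e.
    have lt : phi q < phi (FGplus M B r k i0 s0) by rewrite e phiq.
    have hc' : compatible q (FGplus M B r k i0 s0).
      by have := hcomp _ pP; rewrite /compatible orbC.
    case: (phi_lt hq (FG_biflat hj) hc' lt) => h1 h2.
    rewrite Fj_ge in h1; last by clear -hs; lia.
    rewrite Gj ltnn Wj_small in h2; last by clear -hs; lia.
    split => //; rewrite /FU; by have <- : s0 - (r - k) = i0 by rewrite /s0; clear; lia.
  have T0 : T_B B = set0 by apply: cards0_eq; rewrite card_T; clear -sn hs hn; lia.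
  rewrite T0 clD0 sub0set; split => //.
  have -> : FU = setT.
    by apply: full_M; [exact: flat_cl | rewrite rank_FU; clear -sn hs hn; lia].
  exact: subsetT.
case: upper => up1 up2.
case/biflat_parts: (hq) => fq1 fq2 _ _ hqU.
have lr1 := rank_mono M lower; have ur1 := rank_mono M up1.
have lr2 := rank_mono MD up2.
rewrite rank_FL in lr1; rewrite rank_FU in ur1; rewrite rank_clDT in lr2.
have := phiq; rewrite /phi => ephi.
case: (leqP s0 (rank M q.1)) => c1.
  have E1 : q.1 = FU by apply: flat_eq fq1 up1 _; rewrite rank_FU.
  have rq2 : rank MD q.2 = n - r.
    clear -ephi ur1 c1 q4; set a := rank MD q.2 in ephi q4 *; set b := rank M q.1 in ephi ur1 c1; lia.
  have E2 : q.2 = setT by apply: full_MD.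
  move: hU; apply/negP; rewrite negbK eqEsubset subsetT /=.
  have h1 : FU \subset \bigcup_(p in Q) (p.1 :&: p.2).
    by rewrite -E1 -{1}[q.1]setIT -E2; exact: (bigcup_sup q qQ).
  have h2 : clD M (T_B B) \subset \bigcup_(p in Q) (p.1 :&: p.2).
    case: (leqP r.+1 n.-1) => rn.
      have hj : 1 <= r.+1 <= n.-1 by clear -rn; lia.
      have pP := FG_PP hj.
      apply: subset_trans (bigcup_sup _ (subsetP PQ _ pP)).
      rewrite Gj ifF; last by apply/negbTE; rewrite -leqNgt; clear -hs; lia.
      rewrite Wj_small // Fj (full_M (flat_cl _ _)) ?setTI //.
      by rewrite rank_take; clear; lia.
    have T0 : T_B B = set0 by apply: cards0_eq; rewrite card_T; clear -rn hn; lia.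
    by rewrite T0 clD0 sub0set.
  by rewrite -(F_full (leqnn i0)); rewrite subUset h1 h2.
have E1 : FL = q.1 by apply: flat_eq lower _; [exact: flat_cl | rewrite rank_FL; clear -c1; lia].
have E2 : clD M (T_B B) = q.2.
  apply: (flat_eq (M := MD)) up2 _; first exact: (flat_cl MD).
  rewrite rank_clDT; clear -ephi c1 lr1 hs hn.
  set a := rank MD q.2 in ephi *; set b := rank M q.1 in ephi c1 lr1; lia.
by move: hqU; rewrite -E1 -E2 => /eqP e; move: a0_notFL; rewrite e in_setT.
Qed.

Lemma main_sec : exists i : nat,
    ([/\ 1 <= i <= k.+1 /\ c M B i \notin cl M (S_B M B) :|: clD M (T_B B),
        (forall j, i < j <= k.+1 -> c M B j \in cl M (S_B M B) :|: clD M (T_B B)),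
        cl M (S_B M B :|: cfirst M B i) :|: clD M (T_B B) = setT
      & (forall j, 1 <= j < i -> cl M (S_B M B :|: cfirst M B j) :|: clD M (T_B B) != setT)] /\
      (#|[set FGplus M B r k i j.+1 | j : 'I_n.-1]| = n.-1 /\
        maximal_biflag M [set FGplus M B r k i j.+1 | j : 'I_n.-1])).
Proof.
exists i0; split; first exact: part1.
split; first exact: card_PP.
split; first exact: PP_biflag.
exact: PP_max.
Qed.

End Main.

Theorem mainTheorem5 (n r k : nat) (M : matroid n)
  (noloop : forall x, ~ is_loop M x) (nocoloop : forall x, ~ is_coloop M x)
  (hrank : rank M setT = r.+1)
  (B : {set 'I_n.+1}) (hB : nbc_basis M B) (hk : #|IA M B| = k.+1) :
  exists i : nat,
    ([/\ (* (1) i is the largest index with c_i outside cl(S_B) ∪ cl^⊥(T_B) ... *)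
        1 <= i <= k.+1 /\ c M B i \notin cl M (S_B M B) :|: clD M (T_B B),
        (forall j, i < j <= k.+1 -> c M B j \in cl M (S_B M B) :|: clD M (T_B B)),
        (* ... and also the smallest index with cl(S_B ∪ {c_1..c_i}) ∪ cl^⊥(T_B) = E *)
        cl M (S_B M B :|: cfirst M B i) :|: clD M (T_B B) = setT
      & (forall j, 1 <= j < i -> cl M (S_B M B :|: cfirst M B j) :|: clD M (T_B B) != setT)] /\
        (* (2) the n-1 pairs F^+_j | G^+_j form a maximal biflag *)
      (#|[set FGplus M B r k i j.+1 | j : 'I_n.-1]| = n.-1 /\
        maximal_biflag M [set FGplus M B r k i j.+1 | j : 'I_n.-1])).
Proof.
have hBasis : is_basis M B by case/andP: hB.
have [y0 y0B] : exists y0, y0 \notin B.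
  case: (boolP [exists y, y \notin B]) => [/existsP[y hy]|]; first by exists y.
  rewrite negb_exists => /forallP hall; exfalso; apply: (@nocoloop ord0) => B' hB'.
  have BT : B = setT by apply/setP => y; rewrite in_setT; have := hall y; rewrite negbK.
  case/andP: hB' => _ /eqP e'; case/andP: hBasis => _ /eqP e.
  have : B' == setT by rewrite eqEcard subsetT /= e' -e BT.
  by move/eqP ->; rewrite in_setT.
pose b0 := [arg min_(y < y0 | y \notin B) val y].
have [b0nB b0min] : b0 \notin B /\ forall y, y \notin B -> b0 <= y.
  by rewrite /b0; case: arg_minnP => // z hz hmin; split => // y; exact: hmin.
case: (exD hrank hB hk b0nB) => a aD /andP[aB ab].
have aIA := IA_lt hrank hB hk b0nB b0min aB ab.
have P0 : (a \in IA M B) && (a \in D r M B b0) by rewrite aIA aD.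
pose a0 := [arg min_(y < a | (y \in IA M B) && (y \in D r M B b0)) val y].
have [a0IA a0D a0min] : [/\ a0 \in IA M B, a0 \in D r M B b0 &
    forall y, y \in IA M B -> y \in D r M B b0 -> a0 <= y].
  rewrite /a0; case: arg_minnP => // z /andP[h1 h2] hmin; split => // y h1' h2'.
  by apply: hmin; rewrite h1' h2'.
exact: (main_sec noloop nocoloop hrank hB hk b0nB b0min a0IA a0D a0min).
Qed.
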